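(* Let $\theta_0\in\mathbb{R}$ and let $\hat\theta_u,\hat\theta_b$ be real random variables with finite second moments such that $\mathbb{E}[\hat\theta_u]=\theta_0$ and $\mathbb{E}[\hat\theta_b]=\theta_0+\mu$ for some (arbitrary) $\mu\in\mathbb{R}$. Write $\sigma^2_u=\mathrm{Var}(\hat\theta_u)$, $\sigma^2_b=\mathrm{Var}(\hat\theta_b)$, $\sigma_{bu}=\mathrm{Cov}(\hat\theta_b,\hat\theta_u)$, and assume $\sigma^2_u>0$ and $\sigma^2_u+\sigma^2_b-2\sigma_{bu}>0$. Suppose the variances and covariance are known, and define $$\hat\lambda=\frac{\sigma^2_u-\sigma_{bu}}{(\hat\theta_u-\hat\theta_b)^2+\sigma^2_u+\sigma^2_b-2\sigma_{bu}},\qquad \hat\theta_{\hat\lambda}=\hat\lambda\hat\theta_b+(1-\hat\lambda)\hat\theta_u.$$ Let $c=\sigma_b/\sigma_u$ and $\rho=\sigma_{bu}/\sqrt{\sigma^2_u\sigma^2_b}$, with $\rho=0$ if $\sigma^2_b=0$. Then $$\mathbb{E}\big[(\hat\theta_{\hat\lambda}-\theta_0)^2\big]\le \sigma^2_u\left(1+\frac12\,\frac{|1-\rho c|}{\sqrt{1-2\rho c+c^2}}\right)^2 .$$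
   Context: $\hat\theta_u$ is an unbiased estimator of $\theta_0$ and $\hat\theta_b$ is a possibly biased estimator with unknown bias $\mu$; $\hat\theta_{\hat\lambda}$ is the combination estimator. $\sigma_u,\sigma_b$ denote the nonnegative square roots of $\sigma^2_u,\sigma^2_b$. *)

(* Defs.v *)
From HB Require Import structures.
From mathcomp Require Import all_boot all_order all_algebra.
From mathcomp Require Import all_classical all_reals all_analysis.
Set Implicit Arguments. Unset Strict Implicit. Unset Printing Implicit Defensive.
Import Order.TTheory GRing.Theory Num.Theory.
Local Open Scope ring_scope.

Definition var_r d (T : measurableType d) (R : realType) (P : probability T R)
  (X : T -> R) : R := fine ('V_P[X])%E.
Definition cov_r d (T : measurableType d) (R : realType) (P : probability T R)
  (X Y : T -> R) : R := fine (covariance P X Y).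

Definition lambda_hat (R : realType) (T : Type) (su2 sb2 sbu : R)
  (tu tb : T -> R) : T -> R :=
  fun w => (su2 - sbu) / ((tu w - tb w) ^+ 2 + su2 + sb2 - 2 * sbu).

Definition combo_est (R : realType) (T : Type) (su2 sb2 sbu : R)
  (tu tb : T -> R) : T -> R :=
  fun w => lambda_hat su2 sb2 sbu tu tb w * tb w
           + (1 - lambda_hat su2 sb2 sbu tu tb w) * tu w.

Definition ratio_c (R : realType) (su2 sb2 : R) : R :=
  Num.sqrt sb2 / Num.sqrt su2.

Definition corr_rho (R : realType) (su2 sb2 sbu : R) : R :=
  if sb2 == 0 then 0 else sbu / Num.sqrt (su2 * sb2).

(* Main.v *)
Require Import Defs.
From HB Require Import structures.
From mathcomp Require Import all_boot all_order all_algebra.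
From mathcomp Require Import all_classical all_reals all_analysis.
From mathcomp Require Import ring lra.
Import Order.TTheory GRing.Theory Num.Theory.
Import numFieldNormedType.Exports.
Local Open Scope ring_scope.

Lemma pt_bound (R: realType) (x y s K : R): 0 < s -> 0 <= K -> `|y| <= K ->
  (x+y)^+2 <= (1 + K/s) * x^+2 + (K*s + K^+2).
Proof.
move=> s0 K0 yK.
have hxy : x * y <= `|x| * K.
  by rewrite (le_trans (ler_norm _))// normrM ler_wpM2l.
have hy : y ^+ 2 <= K ^+ 2.
  by rewrite -real_normK ?num_real// lerXn2r// nnegrE.
have hx : x ^+ 2 = `|x| ^+ 2 by rewrite real_normK ?num_real.
have h2 : 0 <= K / s * (`|x| - s) ^+ 2.
  by apply: mulr_ge0; [apply: divr_ge0 => //; exact: ltW | exact: sqr_ge0].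
have e : K / s * (`|x| - s) ^+ 2 = K / s * x ^+ 2 - 2 * `|x| * K + K * s.
  rewrite hx; field; by rewrite gt_eqF.
rewrite sqrrD; lra.
Qed.

Lemma lam_bound (R: realType) (a d v : R) : 0 < v ->
  `|a / (d ^+ 2 + v) * d| <= `|a| / (2 * Num.sqrt v).
Proof.
move=> v0.
have sv : 0 < Num.sqrt v by rewrite sqrtr_gt0.
have dv : 0 < d ^+ 2 + v by rewrite ltr_wpDl ?sqr_ge0.
have key : 2 * `|d| * Num.sqrt v <= d ^+ 2 + v.
  have h0 := sqr_ge0 (`|d| - Num.sqrt v).
  have nd : `|d| ^+ 2 = d ^+ 2 by rewrite real_normK ?num_real.
  have sq : Num.sqrt v ^+ 2 = v by rewrite sqr_sqrtr // ltW.
  move: h0; rewrite sqrrB nd sq; lra.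
rewrite !normrM normfV (gtr0_norm dv).
rewrite ler_pdivlMr ?mulr_gt0// .
have e : `|a| / (d ^+ 2 + v) * `|d| * (2 * Num.sqrt v)
   = `|a| * ((2 * `|d| * Num.sqrt v) / (d ^+ 2 + v)).
  by field; rewrite gt_eqF.
rewrite e ler_piMr// ?ler_pdivrMr// ?mul1r//.
Qed.

Lemma g_cont (R : realType) (a v : R) : 0 < v ->
  continuous (fun y : R => a / (y ^+ 2 + v) * y).
Proof.
move=> v0 y.
have nz : y ^+ 2 + v != 0 by rewrite gt_eqF// ltr_wpDl ?sqr_ge0.
apply: cvgM; last exact: cvg_id.
apply: cvgM; first exact: cvg_cst.
apply: cvgV => //.
apply: cvgD; last exact: cvg_cst.
exact: exprn_continuous.
Qed.

Lemma final_alg (R : realType) (su2 sb2 sbu : R) : 0 < su2 -> 0 <= sb2 ->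
  0 < su2 + sb2 - 2 * sbu -> (sb2 = 0 -> sbu = 0) ->
  (1 + `|su2 - sbu| / (2 * Num.sqrt (su2 + sb2 - 2 * sbu)) / Num.sqrt su2) * su2
  + (`|su2 - sbu| / (2 * Num.sqrt (su2 + sb2 - 2 * sbu)) * Num.sqrt su2
     + (`|su2 - sbu| / (2 * Num.sqrt (su2 + sb2 - 2 * sbu))) ^+ 2)
  <= su2 * (1 + 2^-1 * (`|1 - corr_rho su2 sb2 sbu * ratio_c su2 sb2| /
      Num.sqrt (1 - 2 * corr_rho su2 sb2 sbu * ratio_c su2 sb2 + ratio_c su2 sb2 ^+ 2))) ^+ 2.
Proof.
move=> su0 sb0 v0 sbu0.
set v := su2 + sb2 - 2 * sbu.
set s := Num.sqrt su2.
set t := Num.sqrt v.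
have s0 : 0 < s by rewrite sqrtr_gt0.
have t0 : 0 < t by rewrite sqrtr_gt0.
have ss : s ^+ 2 = su2 by rewrite sqr_sqrtr// ltW.
have tt : t ^+ 2 = v by rewrite sqr_sqrtr// ltW.
have hrc : corr_rho su2 sb2 sbu * ratio_c su2 sb2 = sbu / su2.
  rewrite /corr_rho /ratio_c; case: eqP => [e|/eqP ne].
    by rewrite sbu0// mul0r mul0r.
  have sb1 : 0 < Num.sqrt sb2 by rewrite sqrtr_gt0 lt_neqAle eq_sym ne.
  rewrite sqrtrM ?ltW// -/s -ss.
  field.
  by rewrite gt_eqF// gt_eqF.
have hc2 : ratio_c su2 sb2 ^+ 2 = sb2 / su2.
  by rewrite /ratio_c expr_div_n sqr_sqrtr// -/s ss.
have hden : Num.sqrt (1 - 2 * corr_rho su2 sb2 sbu * ratio_c su2 sb2 + ratio_c su2 sb2 ^+ 2) = t / s.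
  rewrite -mulrA hrc hc2.
  have -> : 1 - 2 * (sbu / su2) + sb2 / su2 = (t / s) ^+ 2.
    rewrite expr_div_n tt ss /v; by field; rewrite ?gt_eqF.
  by rewrite sqrtr_sqr gtr0_norm// divr_gt0.
have hnum : `|1 - corr_rho su2 sb2 sbu * ratio_c su2 sb2| = `|su2 - sbu| / s ^+ 2.
  rewrite hrc ss.
  have -> : 1 - sbu / su2 = (su2 - sbu) / su2 by by field; rewrite ?gt_eqF.
  by rewrite normrM normfV (gtr0_norm su0).
rewrite hden hnum -/t -ss.
set A := `|s ^+ 2 - sbu|.
rewrite le_eqVlt; apply/orP; left; apply/eqP.
by field; rewrite ?gt_eqF.
Qed.

Theorem theorem2 (d : measure_display) (T : measurableType d) (R : realType)
  (P : probability T R) (theta0 mu : R) (tu tb : T -> R) :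
  tu \in Lfun P 2%:E -> tb \in Lfun P 2%:E ->
  ('E_P[tu] = theta0%:E)%E ->
  ('E_P[tb] = (theta0 + mu)%:E)%E ->
  0 < var_r P tu ->
  0 < var_r P tu + var_r P tb - 2 * cov_r P tb tu ->
  let su2 := var_r P tu in
  let sb2 := var_r P tb in
  let sbu := cov_r P tb tu in
  let c := ratio_c su2 sb2 in
  let rho := corr_rho su2 sb2 sbu in
  ('E_P[fun w => ((combo_est su2 sb2 sbu tu tb w - theta0) ^+ 2)%R]
    <= (su2 * (1 + 2^-1 * (`|1 - rho * c| / Num.sqrt (1 - 2 * rho * c + c ^+ 2))) ^+ 2)%:E)%E.
Proof.
move=> tu2 tb2 Etu Etb su0 v0; cbv zeta.
set su2 := var_r P tu in su0 v0 *.
set sb2 := var_r P tb in v0 *.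
set sbu := cov_r P tb tu in v0 *.
set c := ratio_c su2 sb2.
set rho := corr_rho su2 sb2 sbu.
have mtu : measurable_fun setT tu.
  by move: (tu2); rewrite inE => /andP[]; rewrite inE.
have mtb : measurable_fun setT tb.
  by move: (tb2); rewrite inE => /andP[]; rewrite inE.
pose s := Num.sqrt su2.
pose K := `|su2 - sbu| / (2 * Num.sqrt (su2 + sb2 - 2 * sbu)).
have s0 : 0 < s by rewrite sqrtr_gt0.
have K0 : 0 <= K.
  by rewrite divr_ge0// mulr_ge0// sqrtr_ge0.
have hpt : forall w, (combo_est su2 sb2 sbu tu tb w - theta0) ^+ 2
    <= (1 + K / s) * (tu w - theta0) ^+ 2 + (K * s + K ^+ 2).
  move=> w.
  have -> : combo_est su2 sb2 sbu tu tb w - theta0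
      = (tu w - theta0) + (su2 - sbu) / ((tb w - tu w) ^+ 2 + (su2 + sb2 - 2 * sbu)) * (tb w - tu w).
    rewrite /combo_est /lambda_hat.
    have -> : (tu w - tb w) ^+ 2 + su2 + sb2 - 2 * sbu = (tb w - tu w) ^+ 2 + (su2 + sb2 - 2 * sbu) by ring.
    ring.
  apply: pt_bound => //.
  exact: lam_bound.
pose g := fun y : R => (su2 - sbu) / (y ^+ 2 + (su2 + sb2 - 2 * sbu)) * y.
have mf : measurable_fun setT
    (fun w => (combo_est su2 sb2 sbu tu tb w - theta0) ^+ 2).
  have -> : (fun w => (combo_est su2 sb2 sbu tu tb w - theta0) ^+ 2)
     = (fun w => ((tu w - theta0) + g (tb w - tu w)) ^+ 2).
    apply/funext => w; congr (_ ^+ 2); rewrite /g /combo_est /lambda_hat.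
    have -> : (tu w - tb w) ^+ 2 + su2 + sb2 - 2 * sbu = (tb w - tu w) ^+ 2 + (su2 + sb2 - 2 * sbu) by ring.
    ring.
  apply: measurable_realfun.measurable_funX.
  apply: measurable_realfun.measurable_funD.
    exact: measurable_realfun.measurable_funB.
  apply: measurableT_comp.
    by apply: measurable_realfun.continuous_measurable_fun; exact: g_cont.
  exact: measurable_realfun.measurable_funB.
pose X := (tu \- cst theta0)%R.
have X2 : X \in Lfun P 2%:E.
  rewrite /X rpredB//; first by rewrite lee1n.
  move=> ?; exact: Lfun_cst.
have XX1 : (X \* X)%R \in Lfun P 1 by exact: Lfun2_mul_Lfun1.
have EX : ('E_P[X \* X] = su2%:E)%E.
  rewrite /su2 /var_r fineK ?variance_fin_num//.
  by rewrite /variance covariance.unlock Etu.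
pose G := (((1 + K / s) \o* (X \* X)) \+ cst (K * s + K ^+ 2))%R.
have mX : measurable_fun setT X.
  apply: measurable_realfun.measurable_funB => //.
have mG : measurable_fun setT G.
  apply: measurable_realfun.measurable_funD => //.
  apply: measurable_realfun.measurable_funM => //.
  exact: measurable_realfun.measurable_funM.
have Hle : ('E_P[fun w => ((combo_est su2 sb2 sbu tu tb w - theta0) ^+ 2)%R] <= 'E_P[G])%E.
  apply: expectation_le => //.
  - by move=> w; exact: sqr_ge0.
  - move=> w; rewrite /G /=; apply: addr_ge0.
      have sq : forall x : R, 0 <= x * x by move=> x; rewrite -expr2 sqr_ge0.
      apply: mulr_ge0; first exact: sq.
      by apply: addr_ge0 => //; apply: divr_ge0 => //; exact: ltW.
    by apply: addr_ge0; [apply: mulr_ge0 => //; exact: ltW | exact: sqr_ge0].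
  - by apply: aeW => w; rewrite /G /X /= mulrC -expr2; exact: hpt.
have EG : ('E_P[G] = ((1 + K / s) * su2 + (K * s + K ^+ 2))%:E)%E.
  rewrite /G expectationD; last 2 first.
  - by apply: Lfun_scale.
  - exact: Lfun_cst.
  by rewrite expectationZl// EX expectation_cst.
apply: (le_trans Hle); rewrite EG lee_fin.
have Pfin : P setT \is a fin_num := fin_num_measure P _ measurableT.
have sb0 : 0 <= sb2 by rewrite /sb2 /var_r; apply: fine_ge0; exact: variance_ge0.
have sbu0 : sb2 = 0 -> sbu = 0.
  move=> e.
  have Vb : 'V_P[tb] = 0%E.
    by rewrite -(fineK (variance_fin_num tb2)); rewrite -/(var_r P tb) -/sb2 e.
  have tb1 := Lfun_subset12 Pfin tb2.
  have tu1 := Lfun_subset12 Pfin tu2.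
  have tbu1 := Lfun2_mul_Lfun1 tb2 tu2.
  have h1 := covariance_le tb2 tu2.
  rewrite Vb sqrte0 mul0e in h1.
  have Ntb2 : (\- tb)%R \in Lfun P 2%:E by rewrite rpredN.
  have h2 := covariance_le Ntb2 tu2.
  rewrite varianceN// Vb sqrte0 mul0e covarianceNl// oppe_le0 in h2.
  have e0 : covariance P tb tu = 0%E by apply/eqP; rewrite eq_le h1 h2.
  by rewrite /sbu /cov_r e0.
exact: final_alg.
Qed.
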